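(* Let $H_1,H_2$ be separable Hilbert spaces, $K\in B(H_1)$, $L\in B(H_2)$. Let $\{x_n\}_{n\geqslant1}$ be a $K$-frame for $H_1$ with a $K$-dual frame $\{f_n\}_{n\geqslant1}$, and $\{y_n\}_{n\geqslant1}$ an $L$-frame for $H_2$ with an $L$-dual frame $\{g_n\}_{n\geqslant1}$. Let $T_1,T_2$ be the synthesis operators of $\{x_n\}$ and $\{y_n\}$, and $\theta_1,\theta_2$ the analysis operators of $\{f_n\}$ and $\{g_n\}$, respectively. The following are equivalent: (i) $\{x_n\oplus y_n\}_{n\geqslant1}$ is a $K\oplus L$-frame for $H_1\oplus H_2$ and $\{f_n\oplus g_n\}_{n\geqslant1}$ is a $K\oplus L$-dual frame to it; (ii) $T_2\theta_1=0$ (as an operator $H_1\to H_2$) and $T_1\theta_2=0$ (as an operator $H_2\to H_1$).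
   Context: $H_1\oplus H_2$ is the Hilbert space of pairs $x\oplus y$ with inner product $\langle x\oplus y,a\oplus b\rangle=\langle x,a\rangle+\langle y,b\rangle$; $(K\oplus L)(x\oplus y)=K(x)\oplus L(y)$. For a Hilbert space $H$ and $K\in B(H)$, $\{z_n\}_{n\geqslant1}$ is a $K$-frame if there are $A,B>0$ with $A\|K^*z\|^2\leq\sum_n|\langle z,z_n\rangle|^2\leq B\|z\|^2$ for all $z\in H$. A $K$-dual frame to a $K$-frame $\{z_n\}$ is a Bessel sequence $\{f_n\}$ in $H$ with $Kz=\sum_n\langle z,f_n\rangle z_n$ for all $z\in H$. For a Bessel sequence $\{z_n\}$: synthesis operator $T:\ell^2\to H$, $T(\{a_n\})=\sum_na_nz_n$; analysis operator $\theta:H\to\ell^2$, $\theta(z)=\{\langle z,z_n\rangle\}_n$. *)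

(* Defs.v *)
From HB Require Import structures.
From mathcomp Require Import all_boot all_order all_algebra.
From mathcomp Require Import complex.
From mathcomp Require Import all_classical all_reals ereal topology normedtype sequences.
Set Implicit Arguments. Unset Strict Implicit. Unset Printing Implicit Defensive.
Import Order.TTheory GRing.Theory Num.Theory.
Import numFieldNormedType.Exports.
Local Open Scope classical_set_scope.
Local Open Scope ring_scope.

Section HilbertDefs.
Variable R : realType.
Local Notation C := (complex R).

Definition inner_product (V : lmodType C) (ip : V -> V -> C) : Prop :=
  [/\ (forall (a : C) (x y z : V), ip (a *: x + y) z = a * ip x z + ip y z),
      (forall x y : V, ip y x = conjc (ip x y)),
      (forall x : V, 0 <= ip x x) &
      (forall x : V, ip x x = 0 -> x = 0)].

Definition nsq (V : lmodType C) (ip : V -> V -> C) (x : V) : R := complex.Re (ip x x).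
Definition hnorm (V : lmodType C) (ip : V -> V -> C) (x : V) : R :=
  Num.sqrt (nsq ip x).

Definition csq (c : C) : R := complex.Re c ^+ 2 + complex.Im c ^+ 2.

Definition has_sum (V : lmodType C) (ip : V -> V -> C) (u : nat -> V) (s : V) :=
  (fun N : nat => hnorm ip (s - \sum_(n < N) u n)) @ \oo --> (0 : R).

Definition complete_ip (V : lmodType C) (ip : V -> V -> C) : Prop :=
  forall u : nat -> V,
    (forall e : R, 0 < e -> exists N : nat, forall m n : nat,
        (N <= m)%N -> (N <= n)%N -> hnorm ip (u m - u n) < e) ->
    exists l : V, (fun n : nat => hnorm ip (u n - l)) @ \oo --> (0 : R).

Definition separable_ip (V : lmodType C) (ip : V -> V -> C) : Prop :=
  exists d : nat -> V, forall (x : V) (e : R), 0 < e ->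
    exists n : nat, hnorm ip (x - d n) < e.

Definition hilbert_space (V : lmodType C) (ip : V -> V -> C) : Prop :=
  inner_product ip /\ complete_ip ip.

Definition separable_hilbert_space (V : lmodType C) (ip : V -> V -> C) : Prop :=
  hilbert_space ip /\ separable_ip ip.

Definition bounded_operator (V W : lmodType C) (ipV : V -> V -> C)
    (ipW : W -> W -> C) (K : V -> W) : Prop :=
  (forall (a : C) (x y : V), K (a *: x + y) = a *: K x + K y) /\
  exists M : R, forall x : V, hnorm ipW (K x) <= M * hnorm ipV x.

Definition is_adjoint (V W : lmodType C) (ipV : V -> V -> C)
    (ipW : W -> W -> C) (K : V -> W) (Ks : W -> V) : Prop :=
  forall (x : V) (y : W), ipW (K x) y = ipV x (Ks y).

Definition frame_sum (V : lmodType C) (ip : V -> V -> C) (z : nat -> V) (w : V)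
  : \bar R := (\sum_(0 <= n <oo) ((csq (ip w (z n)))%:E))%E.

Definition bessel (V : lmodType C) (ip : V -> V -> C) (z : nat -> V) : Prop :=
  exists B : R, 0 < B /\ forall w : V, (frame_sum ip z w <= (B * nsq ip w)%:E)%E.

Definition K_frame (V : lmodType C) (ip : V -> V -> C) (K : V -> V)
    (z : nat -> V) : Prop :=
  exists A B : R, [/\ 0 < A, 0 < B &
    forall Ks : V -> V, is_adjoint ip ip K Ks -> forall w : V,
      ((A * nsq ip (Ks w))%:E <= frame_sum ip z w)%E /\
      (frame_sum ip z w <= (B * nsq ip w)%:E)%E].

Definition K_dual_frame (V : lmodType C) (ip : V -> V -> C) (K : V -> V)
    (z f : nat -> V) : Prop :=
  bessel ip f /\ forall w : V, has_sum ip (fun n => ip w (f n) *: z n) (K w).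

Definition analysis (V : lmodType C) (ip : V -> V -> C) (z : nat -> V) (w : V)
  : nat -> C := fun n => ip w (z n).

(* synthesis operator, relationally: T(a) = s, i.e. sum_n a_n z_n = s *)
Definition synthesis_eq (V : lmodType C) (ip : V -> V -> C) (z : nat -> V)
    (a : nat -> C) (s : V) : Prop := has_sum ip (fun n => a n *: z n) s.

Definition ip_sum (V W : lmodType C) (ipV : V -> V -> C) (ipW : W -> W -> C)
    (p q : V * W) : C := ipV p.1 q.1 + ipW p.2 q.2.

Definition op_sum (V W : lmodType C) (K : V -> V) (L : W -> W) (p : V * W)
  : V * W := (K p.1, L p.2).

End HilbertDefs.

(* Main.v *)
Require Import Defs.
From HB Require Import structures.
From mathcomp Require Import all_boot all_order all_algebra.
From mathcomp Require Import complex.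
From mathcomp Require Import all_classical all_reals ereal topology normedtype sequences.
From mathcomp Require Import lra ring.
Import Order.TTheory GRing.Theory Num.Theory.
Import numFieldNormedType.Exports.
Set Implicit Arguments. Unset Strict Implicit.
Local Open Scope classical_set_scope.
Local Open Scope ring_scope.
Section C.
Variable R : realType.
Implicit Types a b : complex R.
Lemma ReD a b : complex.Re (a + b) = complex.Re a + complex.Re b.
Proof. by case: a => ? ?; case: b. Qed.
Lemma ImD a b : complex.Im (a + b) = complex.Im a + complex.Im b.
Proof. by case: a => ? ?; case: b. Qed.
Lemma ReM a b : complex.Re (a * b) = complex.Re a * complex.Re b - complex.Im a * complex.Im b.
Proof. by case: a => ? ?; case: b. Qed.
Lemma ImM a b : complex.Im (a * b) = complex.Re a * complex.Im b + complex.Im a * complex.Re b.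
Proof. by case: a => ? ?; case: b. Qed.
Lemma ReJ a : complex.Re (conjc a) = complex.Re a.
Proof. by case: a. Qed.
Lemma ImJ a : complex.Im (conjc a) = - complex.Im a.
Proof. by case: a. Qed.
Lemma ReN a : complex.Re (- a) = - complex.Re a. Proof. by case: a. Qed.
Lemma Re0 : complex.Re (0 : complex R) = 0. Proof. by []. Qed.
Lemma ReC (r : R) : complex.Re ((r%:C)%C) = r. Proof. by []. Qed.
Lemma ImC (r : R) : complex.Im ((r%:C)%C) = 0. Proof. by []. Qed.
Lemma ge0_Im a : 0 <= a -> complex.Im a = 0.
Proof. by move/ger0_Im. Qed.
Lemma ge0_Re a : 0 <= a -> 0 <= complex.Re a.
Proof. by rewrite lecE => /andP[]. Qed.
End C.
Section IP.
Variable R : realType.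
Local Notation C := (complex R).
Variable V : lmodType C.
Variable ip : V -> V -> C.
Hypothesis hip : inner_product ip.

Lemma ipC x y : ip y x = conjc (ip x y).
Proof. by case: hip. Qed.
Lemma ipDZ a x y z : ip (a *: x + y) z = a * ip x z + ip y z.
Proof. by case: hip. Qed.
Lemma ip0l z : ip 0 z = 0.
Proof.
have h := ipDZ 1 0 0 z; rewrite scaler0 addr0 mul1r in h.
by apply: (addrI (ip 0 z)); rewrite addr0 -h.
Qed.
Lemma ip0r z : ip z 0 = 0.
Proof. by rewrite ipC ip0l conjc0. Qed.
Lemma ipD x y z : ip (x + y) z = ip x z + ip y z.
Proof. by rewrite -{1}(scale1r x) ipDZ mul1r. Qed.
Lemma ipZ a x z : ip (a *: x) z = a * ip x z.
Proof. by rewrite -(addr0 (a *: x)) ipDZ ip0l addr0. Qed.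
Lemma ipN x z : ip (- x) z = - ip x z.
Proof. by rewrite -scaleN1r ipZ mulN1r. Qed.
Lemma ipsum N (F : nat -> V) z :
  ip (\sum_(i < N) F i) z = \sum_(i < N) ip (F i) z.
Proof.
elim: N => [|N IH]; first by rewrite !big_ord0 ip0l.
by rewrite !big_ord_recr /= ipD IH.
Qed.
Lemma nsq_ge0 x : 0 <= nsq ip x.
Proof. by case: hip => _ _ h _; apply: ge0_Re. Qed.
Lemma Reip_sym x y : complex.Re (ip y x) = complex.Re (ip x y).
Proof. by rewrite ipC ReJ. Qed.
Lemma nsqD x y : nsq ip (x + y) = nsq ip x + nsq ip y + 2 * complex.Re (ip x y).
Proof.
rewrite /nsq ipD !ReD ![ip _ (x + y)]ipC !ipD !ReJ !ReD (Reip_sym y x).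
by rewrite mulr2n mulrDl !mul1r; lra.
Qed.
Lemma ReipZ (s : R) x z : complex.Re (ip ((s%:C)%C *: x) z) = s * complex.Re (ip x z).
Proof. by rewrite ipZ ReM ReC ImC mul0r subr0. Qed.
Lemma ReipN x z : complex.Re (ip (- x) z) = - complex.Re (ip x z).
Proof. by rewrite ipN ReN. Qed.
Lemma nsqN x : nsq ip (- x) = nsq ip x.
Proof. by rewrite /nsq ReipN (Reip_sym (-x) x) ReipN opprK. Qed.
Lemma nsqZ (s : R) x : nsq ip ((s%:C)%C *: x) = s ^+ 2 * nsq ip x.
Proof. by rewrite /nsq ReipZ (Reip_sym ((s%:C)%C *: x) x) ReipZ mulrA expr2. Qed.
Lemma amgm (s : R) d w :
  2 * s * complex.Re (ip d w) <= s ^+ 2 * nsq ip d + nsq ip w.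
Proof.
have := nsq_ge0 ((s%:C)%C *: d - w).
rewrite nsqD nsqN nsqZ.
rewrite (Reip_sym (-w) ((s%:C)%C *: d)) ReipN (Reip_sym ((s%:C)%C *: d) w) ReipZ.
lra.
Qed.
Lemma nsq_add_le x y : nsq ip (x + y) <= 2 * nsq ip x + 2 * nsq ip y.
Proof.
have := amgm (-1) x (- y); rewrite (Reip_sym (-y) x) ReipN (Reip_sym x y) nsqN nsqD.
have := nsq_ge0 x; have := nsq_ge0 y. nra.
Qed.
End IP.
Section Cv.
Variable R : realType.
Lemma t0P (u : nat -> R) : (forall n, 0 <= u n) ->
  ((fun n => u n) @ \oo --> (0 : R)) <-> (forall e, 0 < e -> exists N, forall n, (N <= n)%N -> u n < e).
Proof.
move=> u0; rewrite cvgrPdist_lt; split.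
  move=> h e e0; have [N _ HN] := h e e0.
  exists N => n Nn; have := HN n Nn; rewrite /= sub0r normrN ger0_norm //.
move=> h e e0; have [N HN] := h e e0; exists N => // n /= Nn.
by rewrite sub0r normrN ger0_norm //; exact: HN.
Qed.
End Cv.
Section Ser.
Variable R : realType.
Local Notation C := (complex R).
Lemma csq_ge0 (c : C) : 0 <= csq c.
Proof. by rewrite /csq addr_ge0 // sqr_ge0. Qed.

Variable V : lmodType C.
Variable ip : V -> V -> C.
Implicit Types z : nat -> V.

Lemma fs_ge0 z w : (0 <= frame_sum ip z w)%E.
Proof. by apply: nneseries_ge0 => n _ _; rewrite lee_fin csq_ge0. Qed.

Lemma fs_partial z w N (M : R) : (frame_sum ip z w <= M%:E)%E ->
  \sum_(i < N) csq (ip w (z i)) <= M.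
Proof.
move=> h; rewrite -lee_fin; apply: le_trans h.
rewrite -sumEFin -(big_mkord xpredT (fun i => (csq (ip w (z i)))%:E)).
by apply: nneseries_lim_ge => n _ _; rewrite lee_fin csq_ge0.
Qed.

Lemma fs_le z w (M : R) : (forall N, \sum_(i < N) csq (ip w (z i)) <= M) ->
  (frame_sum ip z w <= M%:E)%E.
Proof.
move=> h; apply: lime_le.
  by apply: is_cvg_nneseries => n _ _; rewrite lee_fin csq_ge0.
apply: nearW => N /=; rewrite sumEFin lee_fin big_mkord; exact: h.
Qed.
End Ser.
Section HS.
Variable R : realType.
Local Notation C := (complex R).

Definition T0 (a : nat -> R) :=
  forall e, 0 < e -> exists N, forall n, (N <= n)%N -> a n < e.

Lemma sqrt_lt (a e : R) : 0 < e -> (Num.sqrt a < e) = (a < e ^+ 2).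
Proof.
move=> e0; have He : e = Num.sqrt (e ^+ 2) by rewrite sqrtr_sqr ger0_norm // ltW.
by rewrite {1}He ltr_sqrt // exprn_gt0.
Qed.

Lemma sqrt_T0 (a : nat -> R) : (forall n, 0 <= a n) ->
  ((fun n => Num.sqrt (a n)) @ \oo --> (0 : R)) <-> T0 a.
Proof.
move=> a0; rewrite t0P; last by move=> n; exact: sqrtr_ge0.
split.
  move=> h e e0; have [|N HN] := h (Num.sqrt e); first by rewrite sqrtr_gt0.
  by exists N => n /HN; rewrite ltr_sqrt.
move=> h e e0; have [|N HN] := h (e ^+ 2); first by rewrite exprn_gt0.
by exists N => n /HN; rewrite sqrt_lt.
Qed.
End HS.
Section Dual.
Variable R : realType.
Local Notation C := (complex R).
Variable V : lmodType C.
Variable ip : V -> V -> C.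
Hypothesis hip : inner_product ip.

Lemma has_sumP (u : nat -> V) s :
  has_sum ip u s <-> T0 (fun N => nsq ip (s - \sum_(n < N) u n)).
Proof. rewrite /has_sum /hnorm; apply: sqrt_T0 => n; exact: nsq_ge0. Qed.

Lemma ReS N (c : nat -> C) : complex.Re (\sum_(i < N) c i) = \sum_(i < N) complex.Re (c i).
Proof.
elim: N => [|N IH]; first by rewrite !big_ord0.
by rewrite !big_ord_recr /= ReD IH.
Qed.

Lemma dual_lower (K : V -> V) (X F : nat -> V) (Ks : V -> V) (B : R) :
  0 < B -> (forall u, (frame_sum ip F u <= (B * nsq ip u)%:E)%E) ->
  (forall u, has_sum ip (fun n => ip u (F n) *: X n) (K u)) ->
  is_adjoint ip ip K Ks -> forall w, ((B^-1 * nsq ip (Ks w))%:E <= frame_sum ip X w)%E.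
Proof.
move=> B0 hF hK hadj w.
set u := Ks w.
case Sd: (frame_sum ip X w) => [s| |]; last 2 first.
- by rewrite leey.
- by have := fs_ge0 ip X w; rewrite Sd.
rewrite lee_fin ler_pdivrMl //.
have hs N : \sum_(i < N) csq (ip w (X i)) <= s by apply: (@fs_partial _ _ ip X w N s); rewrite Sd.
have hb N : \sum_(i < N) csq (ip u (F i)) <= B * nsq ip u by apply: (@fs_partial _ _ ip F u N).
have e1 : nsq ip u = complex.Re (ip (K u) w) by rewrite hadj.
rewrite leNgt; apply/negP => hg.
set g := nsq ip u - B * s.
have g0 : 0 < g by rewrite /g subr_gt0.
have w0 := nsq_ge0 hip w.
set t := 2 * (nsq ip w + 1) / g.
have t0 : 0 < t by rewrite /t divr_gt0 // mulr_gt0 // ltr_wpDl.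
have tg : t * g = 2 * (nsq ip w + 1) by rewrite /t divfK // gt_eqF.
have hKu := (has_sumP _ _).1 (hK u).
have egt : 0 < g / (2 * t) by rewrite divr_gt0 // mulr_gt0.
have [N HN] := hKu _ egt.
have := HN N (leqnn N).
set P := \sum_(i < N) ip u (F i) *: X i.
set d := K u - P => hnd.
have Kud : K u = d + P by rewrite /d subrK.
have hP : 2 * B * complex.Re (ip P w) <= B * nsq ip u + B ^+ 2 * s.
  rewrite /P (ipsum hip N (fun n => ip u (F n) *: X n) w) (ReS N (fun n => ip (ip u (F n) *: X n) w)) mulr_sumr.
  apply: (@le_trans _ _ (\sum_(i < N) (csq (ip u (F i)) + B ^+ 2 * csq (ip w (X i))))).
    apply: ler_sum => i _; rewrite (ipZ hip) (ipC hip w (X i)) ReM ReJ ImJ /csq.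
    set a1 := complex.Re _; set a2 := complex.Im (ip u _).
    set b1 := complex.Re _; set b2 := complex.Im _.
    have := sqr_ge0 (a1 - B * b1); have := sqr_ge0 (a2 - B * b2).
    rewrite !expr2; nra.
  rewrite big_split /= -mulr_sumr; apply: lerD; first exact: hb.
  apply: ler_wpM2l; [exact: exprn_ge0 (ltW B0) | exact: hs].
have hd := amgm hip t d w.
rewrite Kud (ipD hip) ReD in e1.
have h1 : g <= 2 * complex.Re (ip d w).
  rewrite /g; nra.
have h2 : t ^+ 2 * nsq ip d < nsq ip w + 1.
  have : t ^+ 2 * nsq ip d < t ^+ 2 * (g / (2 * t)).
    by rewrite ltr_pM2l // exprn_gt0.
  suff -> : t ^+ 2 * (g / (2 * t)) = nsq ip w + 1 by [].
  have -> : t ^+ 2 * (g / (2 * t)) = t * g / 2.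
    by field; rewrite gt_eqF.
  by rewrite tg; field.
nra.
Qed.
End Dual.
Section Pair.
Variable R : realType.
Local Notation C := (complex R).
Variables H1 H2 : lmodType C.
Variable ip1 : H1 -> H1 -> C.
Variable ip2 : H2 -> H2 -> C.
Hypothesis hip1 : inner_product ip1.
Hypothesis hip2 : inner_product ip2.
Local Notation ipS := (ip_sum ip1 ip2).

Lemma fst_sum N (F : 'I_N -> H1 * H2) : (\sum_(i < N) F i).1 = \sum_(i < N) (F i).1.
Proof. exact: (big_morph fst (fun (p q : H1 * H2) => erefl) erefl). Qed.
Lemma snd_sum N (F : 'I_N -> H1 * H2) : (\sum_(i < N) F i).2 = \sum_(i < N) (F i).2.
Proof. exact: (big_morph snd (fun (p q : H1 * H2) => erefl) erefl). Qed.

Lemma ipS_ip : inner_product ipS.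
Proof.
case: hip1 => l1 c1 p1 d1; case: hip2 => l2 c2 p2 d2.
split.
- move=> a [x1 x2] [y1 y2] [z1 z2]; rewrite /ip_sum /= l1 l2 mulrDr.
  by rewrite -!addrA; congr (_ + _); rewrite addrCA.
- move=> [x1 x2] [y1 y2]; rewrite /ip_sum /= c1 c2.
  by rewrite rmorphD.
- by move=> [x1 x2]; rewrite /ip_sum /= addr_ge0.
- move=> [x1 x2]; rewrite /ip_sum /= => /eqP; rewrite paddr_eq0 //.
  by case/andP => /eqP /d1 -> /eqP /d2 ->.
Qed.

Lemma nsqS p : nsq ipS p = nsq ip1 p.1 + nsq ip2 p.2.
Proof. by rewrite /nsq /ip_sum ReD. Qed.

Lemma csqD (c d : C) : csq (c + d) <= 2 * csq c + 2 * csq d.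
Proof.
rewrite /csq ReD ImD.
have := sqr_ge0 (complex.Re c - complex.Re d).
have := sqr_ge0 (complex.Im c - complex.Im d).
rewrite !expr2; nra.
Qed.

Lemma pair_bound (a : nat -> H1) (b : nat -> H2) w1 w2 (M1 M2 : R) :
  (frame_sum ip1 a w1 <= M1%:E)%E -> (frame_sum ip2 b w2 <= M2%:E)%E ->
  (frame_sum ipS (fun n => (a n, b n)) (w1, w2) <= (2 * M1 + 2 * M2)%:E)%E.
Proof.
move=> h1 h2; apply: fs_le => N.
apply: (@le_trans _ _ (\sum_(i < N) (2 * csq (ip1 w1 (a i)) + 2 * csq (ip2 w2 (b i))))).
  by apply: ler_sum => i _; exact: csqD.
rewrite big_split /= -!mulr_sumr; apply: lerD; rewrite ler_pM2l //.
  exact: (fs_partial N h1).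
exact: (fs_partial N h2).
Qed.
End Pair.
Lemma T0_le4 (R : realType) (r a b c d : nat -> R) :
  (forall n, r n <= 4 * (a n + b n + c n + d n)) -> T0 a -> T0 b -> T0 c -> T0 d -> T0 r.
Proof.
move=> h ha hb hc hd e e0.
have e4 : 0 < e / 16 by rewrite divr_gt0.
have [Na HA] := ha _ e4; have [Nb HB] := hb _ e4.
have [Nc HC] := hc _ e4; have [Nd HD] := hd _ e4.
exists (maxn (maxn Na Nb) (maxn Nc Nd)) => n.
rewrite !geq_max => /andP[/andP[/HA p /HB q] /andP[/HC s /HD t]].
have := h n; lra.
Qed.

Lemma op0 (R : realType) (V : lmodType (complex R)) (ip : V -> V -> complex R) (K : V -> V) :
  bounded_operator ip ip K -> K 0 = 0.
Proof.
case=> hl _; have h := hl 1 0 0; rewrite scaler0 addr0 scale1r in h.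
by apply: (addrI (K 0)); rewrite addr0 -h.
Qed.

Close Scope classical_set_scope.
Unset Implicit Arguments.

Theorem proposition2p17 (R : realType) (H1 H2 : lmodType (complex R))
    (ip1 : H1 -> H1 -> complex R) (ip2 : H2 -> H2 -> complex R)
    (hH1 : separable_hilbert_space ip1) (hH2 : separable_hilbert_space ip2)
    (K : H1 -> H1) (L : H2 -> H2)
    (hK : bounded_operator ip1 ip1 K) (hL : bounded_operator ip2 ip2 L)
    (x f : nat -> H1) (y g : nat -> H2)
    (hx : K_frame ip1 K x) (hf : K_dual_frame ip1 K x f)
    (hy : K_frame ip2 L y) (hg : K_dual_frame ip2 L y g) :
  (K_frame (ip_sum ip1 ip2) (op_sum K L) (fun n => (x n, y n)) /\
   K_dual_frame (ip_sum ip1 ip2) (op_sum K L) (fun n => (x n, y n))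
     (fun n => (f n, g n)))
  <->
  ((forall w : H1, synthesis_eq ip2 y (analysis ip1 f w) 0) /\
   (forall w : H2, synthesis_eq ip1 x (analysis ip2 g w) 0)).
Proof.
have hip1 : inner_product ip1 by case: hH1 => [[]].
have hip2 : inner_product ip2 by case: hH2 => [[]].
have ipP := ipS_ip hip1 hip2.
have K0 := op0 hK; have L0 := op0 hL.
split.
- case=> _ [_ hrec]; split => w.
  + have := (has_sumP ipP _ _).1 (hrec (w, 0)).
    rewrite /synthesis_eq (has_sumP hip2) => h e e0.
    have [N HN] := h e e0; exists N => n /HN; apply: le_lt_trans.
    rewrite nsqS.
    have -> : (op_sum K L (w, 0) - \sum_(i < n) ip_sum ip1 ip2 (w, 0) (f i, g i) *: (x i, y i)).2
       = 0 - \sum_(i < n) analysis ip1 f w i *: y i.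
      rewrite /= snd_sum L0; congr (_ - _); apply: eq_bigr => i _.
      by rewrite /= /ip_sum /= ip0l // addr0.
    by rewrite lerDr nsq_ge0.
  + have := (has_sumP ipP _ _).1 (hrec (0, w)).
    rewrite /synthesis_eq (has_sumP hip1) => h e e0.
    have [N HN] := h e e0; exists N => n /HN; apply: le_lt_trans.
    rewrite nsqS.
    have -> : (op_sum K L (0, w) - \sum_(i < n) ip_sum ip1 ip2 (0, w) (f i, g i) *: (x i, y i)).1
       = 0 - \sum_(i < n) analysis ip2 g w i *: x i.
      rewrite /= fst_sum K0; congr (_ - _); apply: eq_bigr => i _.
      by rewrite /= /ip_sum /= ip0l // add0r.
    by rewrite lerDl nsq_ge0.
- case=> h1 h2.
  case: hf => [[Bf [Bf0 hBf]] hrf]; case: hg => [[Bg [Bg0 hBg]] hrg].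
  case: hx => [A1 [B1 [A10 B10 hx']]]; case: hy => [A2 [B2 [A20 B20 hy']]].
  have BS0 : 0 < 2 * Bf + 2 * Bg by rewrite addr_gt0 // mulr_gt0.
  have bes : forall p, (frame_sum (ip_sum ip1 ip2) (fun n => (f n, g n)) p <=
      ((2 * Bf + 2 * Bg) * nsq (ip_sum ip1 ip2) p)%:E)%E.
    case=> p1 p2; apply: le_trans (pair_bound (hBf p1) (hBg p2)) _.
    rewrite lee_fin nsqS /=.
    have := nsq_ge0 hip1 p1; have := nsq_ge0 hip2 p2; nra.
  have rec : forall p, has_sum (ip_sum ip1 ip2)
      (fun n => ip_sum ip1 ip2 p (f n, g n) *: (x n, y n)) (op_sum K L p).
    case=> p1 p2; apply/(has_sumP ipP).
    have TA := (has_sumP hip1 _ _).1 (hrf p1).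
    have TB := (has_sumP hip1 _ _).1 (h2 p2).
    have TC := (has_sumP hip2 _ _).1 (hrg p2).
    have TD := (has_sumP hip2 _ _).1 (h1 p1).
    apply: (T0_le4 _ TA TB TC TD) => N.
    rewrite nsqS /= fst_sum snd_sum.
    set S1 := \sum_(n < N) ip1 p1 (f n) *: x n.
    set S2 := \sum_(n < N) analysis ip2 g p2 n *: x n.
    set S3 := \sum_(n < N) ip2 p2 (g n) *: y n.
    set S4 := \sum_(n < N) analysis ip1 f p1 n *: y n.
    have -> : \sum_(i < N) (ip_sum ip1 ip2 (p1, p2) (f i, g i) *: (x i, y i)).1 = S1 + S2.
      by rewrite /S1 /S2 -big_split; apply: eq_bigr => i _; rewrite /= /ip_sum /= scalerDl.
    have -> : \sum_(i < N) (ip_sum ip1 ip2 (p1, p2) (f i, g i) *: (x i, y i)).2 = S4 + S3.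
      by rewrite /S3 /S4 -big_split; apply: eq_bigr => i _; rewrite /= /ip_sum /= scalerDl.
    have -> : K p1 - (S1 + S2) = (K p1 - S1) + (0 - S2) by rewrite sub0r opprD addrA.
    have -> : L p2 - (S4 + S3) = (L p2 - S3) + (0 - S4) by rewrite sub0r opprD addrA addrAC.
    have := nsq_add_le hip1 (K p1 - S1) (0 - S2).
    have := nsq_add_le hip2 (L p2 - S3) (0 - S4).
    have := nsq_ge0 hip1 (K p1 - S1); have := nsq_ge0 hip1 (0 - S2).
    have := nsq_ge0 hip2 (L p2 - S3); have := nsq_ge0 hip2 (0 - S4).
    lra.
  split; last first.
    split; last exact: rec.
    by exists (2 * Bf + 2 * Bg); split.

  exists (2 * Bf + 2 * Bg)^-1, (2 * B1 + 2 * B2); split.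
  - by rewrite invr_gt0.
  - by rewrite addr_gt0 // mulr_gt0.
  move=> Ks hadj w; split.
    exact: (dual_lower ipP BS0 bes rec hadj w).
  case: w => w1 w2.
  have a1 : is_adjoint ip1 ip1 K (fun b => (Ks (b, 0)).1).
    move=> a b; have := hadj (a, 0) (b, 0).
    by rewrite /ip_sum /= L0 ip0r // ip0l // !addr0.
  have a2 : is_adjoint ip2 ip2 L (fun b => (Ks (0, b)).2).
    move=> a b; have := hadj (0, a) (0, b).
    by rewrite /ip_sum /= K0 ip0r // ip0l // !add0r.
  have [_ u1] := hx' _ a1 w1; have [_ u2] := hy' _ a2 w2.
  apply: le_trans (pair_bound u1 u2) _.
  rewrite lee_fin nsqS /=.
  have := nsq_ge0 hip1 w1; have := nsq_ge0 hip2 w2; nra.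
Qed.
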